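(* Let $d\ge 3$. If $w$ is a nonempty word over the alphabet $A=\{a_1,\dots,a_d\}$ (positive letters only, no inverses), then $w$ does not represent the identity element of $G_d$.
   Context: Let $d\ge 3$, $X=\{1,\dots,d\}$, $T$ the $d$-regular rooted tree with vertex set $X^*$. $\mathrm{Aut}(T)$ is the group of root-preserving automorphisms with product left-to-right: $(gh)(u)=h(g(u))$. Sections $g|_u$ are defined by $g(uv)=g(u)\,g|_u(v)$; we write $g=(g|_1,\dots,g|_d)\lambda_g$ with $\lambda_g\in S_d$ the action on the first level; $e$ is the identity; $\overline{j}\in\{1,\dots,d\}$ denotes $j$ mod $d$. $G_d=\langle a_1,\dots,a_d\rangle\le\mathrm{Aut}(T)$ where $a_i$ acts on the first level as $(i\ \overline{i+1})$, with $a_i|_i=a_i$, $a_i|_{\overline{i+1}}=a_{\overline{i+1}}$, and $a_i|_x=e$ otherwise. *)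

(* Defs.v *)
From mathcomp Require Import all_boot.
Set Implicit Arguments. Unset Strict Implicit. Unset Printing Implicit Defensive.

(* Alphabet X = {1,...,d} is represented by 'I_d = {0,...,d-1}
   (letter j+1 of the paper <-> ordinal j); the cyclic successor
   j |-> \overline{j+1} is ordS.  Vertices of the d-regular rooted tree T
   are words over X, i.e. seq 'I_d. *)

(* Action of the generator a_i on vertices, defined by the wreath recursion
   a_i = (a_i|_1,...,a_i|_d) (i  i+1) with a_i|_i = a_i,
   a_i|_{i+1} = a_{i+1}, and a_i|_x = e otherwise:
     a_i (i v)     = (i+1) a_i(v)
     a_i ((i+1) v) = i a_{i+1}(v)
     a_i (x v)     = x v            otherwise. *)
Fixpoint gen_act (d : nat) (i : 'I_d) (u : seq 'I_d) : seq 'I_d :=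
  match u with
  | [::] => [::]
  | x :: v =>
      if x == i then ordS i :: gen_act i v
      else if x == ordS i then i :: gen_act (ordS i) v
      else x :: v
  end.

(* A word w = a_{i1} a_{i2} ... a_{ik} (positive letters), read as an element
   of Aut(T) with the left-to-right product (gh)(u) = h(g(u)): apply a_{i1}
   first, then a_{i2}, ... *)
Definition word_act (d : nat) (w : seq 'I_d) (u : seq 'I_d) : seq 'I_d :=
  foldl (fun v i => gen_act i v) u w.

Definition represents_identity (d : nat) (w : seq 'I_d) : Prop :=
  forall u : seq 'I_d, word_act w u = u.

(* Main.v *)
Require Import Defs.
From mathcomp Require Import all_boot.
From mathcomp Require Import zify.

Section S.
Variable d : nat.
Implicit Types (i x : 'I_d) (w : seq 'I_d).

Definition nxt i x : 'I_d := if x == i then ordS i else if x == ordS i then i else x.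
Definition lab i x : seq 'I_d := if x == i then [:: i] else if x == ordS i then [:: ordS i] else [::].
Fixpoint sec w x : seq 'I_d := match w with [::] => [::] | i :: w' => lab i x ++ sec w' (nxt i x) end.
Fixpoint pos w x : 'I_d := match w with [::] => x | i :: w' => pos w' (nxt i x) end.

Lemma word_act_cons i w (u : seq 'I_d) : word_act (i :: w) u = word_act w (gen_act i u).
Proof. by []. Qed.

Lemma word_act_cat (s t u : seq 'I_d) : word_act (s ++ t) u = word_act t (word_act s u).
Proof. by rewrite /word_act foldl_cat. Qed.

Lemma gen_cons i x (v : seq 'I_d) : gen_act i (x :: v) = nxt i x :: word_act (lab i x) v.
Proof. rewrite /= /nxt /lab; by case: (x == i); case: (x == ordS i). Qed.

Lemma sec_spec w x (v : seq 'I_d) : word_act w (x :: v) = pos w x :: word_act (sec w x) v.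
Proof.
elim: w x v => [|i w IH] x v //.
by rewrite word_act_cons gen_cons IH /= word_act_cat.
Qed.

Lemma sec_id w x : represents_identity w -> represents_identity (sec w x).
Proof. move=> H v; have := H (x :: v); rewrite sec_spec; by case. Qed.

Lemma size_sec w x : size (sec w x) <= size w.
Proof.
elim: w x => [|i w IH] x //=; rewrite size_cat.
have : size (lab i x) <= 1 by rewrite /lab; case: (x == i); case: (x == ordS i).
have := IH (nxt i x); lia.
Qed.

Lemma full i w x : size (sec (i :: w) x) = (size w).+1 ->
  lab i x != [::] /\ size (sec w (nxt i x)) = size w.
Proof.
rewrite /= size_cat; have := size_sec w (nxt i x).
rewrite /lab; case: (x == i); case: (x == ordS i) => /=; lia.
Qed.

Hypothesis hd : 3 <= d.

Lemma valS i : nat_of_ord (ordS i) = if i.+1 == d then 0 else i.+1.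
Proof.
rewrite /=; have := ltn_ord i; case: eqP => [->|H] Hi; first by rewrite modnn.
rewrite modn_small //; lia.
Qed.

Lemma ordS_neq i : ordS i != i.
Proof. apply/eqP => /(congr1 (@nat_of_ord d)); rewrite valS; have := ltn_ord i; case: eqP; lia. Qed.

Lemma ordS2_neq i : ordS (ordS i) != i.
Proof. apply/eqP => /(congr1 (@nat_of_ord d)); rewrite !valS; have := ltn_ord i; case: eqP; case: eqP; rewrite ?valS; try case: eqP; lia. Qed.

Lemma ordS_inj i j : ordS i = ordS j -> i = j.
Proof. move=> /(congr1 (@nat_of_ord d)); rewrite !valS => H; apply/ord_inj; move: H; have := ltn_ord i; have := ltn_ord j; do 2 case: eqP; lia. Qed.

Lemma key i j w : size (sec (i :: j :: w) i) = (size w).+2 ->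
  size (sec (i :: j :: w) (ordS i)) = (size w).+2 -> j = i.
Proof.
move=> /full [_]; rewrite /nxt eqxx => /full [H1 _].
move=> /full [_]; rewrite /nxt (negbTE (ordS_neq i)) eqxx => /full [H2 _].
have labE : forall a b, (lab a b != [::]) = (b == a) || (b == ordS a).
  by move=> a b; rewrite /lab; case: (b == a); case: (b == ordS a).
move: H1 H2; rewrite !labE => /orP [/eqP E1|/eqP E1] /orP [/eqP E2|/eqP E2].
- by rewrite E2.
- exfalso; move: (ordS2_neq j); by rewrite -E2 E1 eqxx.
- by rewrite E2.
- by rewrite (ordS_inj _ _ E1).
Qed.

Lemma main n : forall w, size w = n -> w != [::] -> ~ represents_identity w.
Proof.
elim: n {-2}n (leqnn n) => [|n IHn] m Hm w Hw Hne Hid.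
  by move: Hne; case: w Hw Hid => //= ? ? ?; lia.
have IH : forall w', 0 < size w' < m -> ~ represents_identity w'.
  move=> w' /andP [H1 H2]; apply: (IHn (size w')); [lia| by []|by case: (w') H1].
have Full : forall w x, size w = m -> represents_identity w -> sec w x != [::] ->
   size (sec w x) = m.
  move=> w0 x Hs Hi Hn; have := size_sec w0 x; have := sec_id w0 x Hi.
  case: (ltnP (size (sec w0 x)) m) => Hl; last by lia.
  move=> Hi' _; exfalso; apply: (IH _ _ Hi'); rewrite Hl andbT; by case: (sec w0 x) Hn.
have m0 : 0 < m by rewrite -Hw; case: (w) Hne.
have Two : forall w, size w = m -> represents_identity w ->
    exists i w'', w = i :: i :: w''.
  move=> w0 Hs Hi; case: w0 Hs Hi => [|i [|j w'']] Hs Hi.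
  - by move: Hs m0 => /= <-.
  - have := Hi [:: i]; rewrite /word_act /= eqxx => [[]] /eqP; by rewrite (negbTE (ordS_neq i)).
  - exists i, w''; congr (_ :: _ :: _); apply: (key _ _ w'').
    + rewrite (Full _ _ Hs Hi) //= /lab eqxx //.
    + rewrite (Full _ _ Hs Hi) //= /lab (negbTE (ordS_neq i)) eqxx //.
have [i [w'' Ew]] := Two w Hw Hid.
have Hs : size (sec w i) = m by apply: Full => //; rewrite Ew /= /lab eqxx.
have [k [w3 E3]] := Two _ Hs (sec_id w i Hid).
move: E3; rewrite Ew /= /lab eqxx /nxt eqxx (negbTE (ordS_neq i)) eqxx /=.
case=> <- /eqP; by rewrite (negbTE (ordS_neq i)).
Qed.

End S.

Theorem theorem3p8 (d : nat) (hd : 3 <= d) (w : seq 'I_d) :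
  w != [::] -> ~ represents_identity w.
Proof. exact: (@main d hd (size w) w erefl). Qed.
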